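(* Let $(X,\le,\to,\rightsquigarrow,d,u)$ be a weakly involutive unital quantum B-algebra and let $(\exists,\forall)$ be a pair of strong synchronized maps on $X$ such that $\exists$ is a weak existential quantifier (equivalently, $\forall$ is a weak universal quantifier). Then for all $x,y\in X$: (1) $\forall(\forall x\to\forall y)=\forall x\to\forall y$ and $\forall(\forall x\rightsquigarrow\forall y)=\forall x\rightsquigarrow\forall y$; (2) $\exists(\exists x\to\exists y)=\exists x\to\exists y$ and $\exists(\exists x\rightsquigarrow\exists y)=\exists x\rightsquigarrow\exists y$; (3) $\forall(\forall x\odot\forall y)=\forall x\odot\forall y$; (4) $\exists(\exists x\odot\exists y)=\exists x\odot\exists y$; (5) $\forall((x\to\forall y)\rightsquigarrow\forall y)=(\forall x\to\forall y)\rightsquigarrow\forall y$ and $\forall((x\rightsquigarrow\forall y)\to\forall y)=(\forall x\rightsquigarrow\forall y)\to\forall y$.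
   Context: A quantum B-algebra is a partially ordered set $(X,\le)$ with two binary operations $\to$ and $\rightsquigarrow$ such that for all $x,y,z\in X$: $y\to z\le (x\to y)\to(x\to z)$; $y\rightsquigarrow z\le (x\rightsquigarrow y)\to(x\rightsquigarrow z)$; $y\le z$ implies $x\to y\le x\to z$; and $x\le y\to z$ iff $y\le x\rightsquigarrow z$. It is unital if there is $u\in X$ with $u\to x=u\rightsquigarrow x=x$ for all $x$. A pointed quantum B-algebra has a fixed $d\in X$; write $x^{-}=x\to d$, $x^{\sim}=x\rightsquigarrow d$; it is weakly involutive if $(x^{-})^{\sim}=(x^{\sim})^{-}=x$ for all $x$. In a weakly involutive quantum B-algebra define $x\odot y=(x\to y^{-})^{\sim}$ $(=(y\rightsquigarrow x^{\sim})^{-})$ and $x\oplus y=y^{\sim}\to x$ $(=x^{-}\rightsquigarrow y)$. A map $\tau:X\to X$ is good if $(\tau(x^{-}))^{\sim}=(\tau(x^{\sim}))^{-}$ for all $x$; good maps $\tau,\sigma$ are synchronized if $\sigma(x)=(\tau(x^{-}))^{\sim}=(\tau(x^{\sim}))^{-}$ for all $x$; they are strong synchronized if moreover $\tau\circ\sigma=\sigma$ (which for synchronized maps is equivalent to $\sigma\circ\tau=\tau$). A good map $\exists$ is a weak existential quantifier if for all $x,y$: $\exists d=d$; $\exists u=u$; $x\le\exists x$; $\exists(x\oplus\exists y)=\exists(\exists x\oplus y)=\exists x\oplus\exists y$; $\exists(x\oplus x)=\exists x\oplus\exists x$; $\exists(x\odot\exists y)=\exists(\exists x\odot y)=\exists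 x\odot\exists y$. A good map $\forall$ is a weak universal quantifier if for all $x,y$: $\forall u=u$; $\forall d=d$; $\forall x\le x$; $\forall(x\odot\forall y)=\forall(\forall x\odot y)=\forall x\odot\forall y$; $\forall(x\odot x)=\forall x\odot\forall x$; $\forall(x\oplus\forall y)=\forall(\forall x\oplus y)=\forall x\oplus\forall y$. *)

(* Defs.v *)
Record QBAlg := {
  qcar :> Type;
  qle : qcar -> qcar -> Prop;
  qle_refl : forall x, qle x x;
  qle_antisym : forall x y, qle x y -> qle y x -> x = y;
  qle_trans : forall x y z, qle x y -> qle y z -> qle x z;
  qimp : qcar -> qcar -> qcar;
  qsimp : qcar -> qcar -> qcar;
  qb1 : forall x y z, qle (qimp y z) (qimp (qimp x y) (qimp x z));
  qb2 : forall x y z, qle (qsimp y z) (qsimp (qsimp x y) (qsimp x z));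
  qb3 : forall x y z, qle y z -> qle (qimp x y) (qimp x z);
  qb4 : forall x y z, qle x (qimp y z) <-> qle y (qsimp x z)
}.

Arguments qle {X} : rename.
Arguments qimp {X} : rename.
Arguments qsimp {X} : rename.

Section Defs.
Variable X : QBAlg.

Definition unital_unit (u : X) : Prop :=
  forall x : X, qimp u x = x /\ qsimp u x = x.

Definition nmin (d x : X) : X := qimp x d.
Definition ntil (d x : X) : X := qsimp x d.

Definition weakly_involutive (d : X) : Prop :=
  forall x : X, ntil d (nmin d x) = x /\ nmin d (ntil d x) = x.

Definition odot (d x y : X) : X := ntil d (qimp x (nmin d y)).
Definition oplus (d x y : X) : X := qimp (ntil d y) x.

Definition good_map (d : X) (tau : X -> X) : Prop :=
  forall x : X, ntil d (tau (nmin d x)) = nmin d (tau (ntil d x)).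

Definition synchronized (d : X) (tau sigma : X -> X) : Prop :=
  good_map d tau /\ good_map d sigma /\
  forall x : X, sigma x = ntil d (tau (nmin d x)) /\
                sigma x = nmin d (tau (ntil d x)).

Definition strong_synchronized (d : X) (tau sigma : X -> X) : Prop :=
  synchronized d tau sigma /\ (forall x : X, tau (sigma x) = sigma x).

Definition weak_existential_quantifier (d u : X) (E : X -> X) : Prop :=
  good_map d E /\
  E d = d /\ E u = u /\
  (forall x : X, qle x (E x)) /\
  (forall x y : X, E (oplus d x (E y)) = oplus d (E x) (E y) /\
                   E (oplus d (E x) y) = oplus d (E x) (E y)) /\
  (forall x : X, E (oplus d x x) = oplus d (E x) (E x)) /\
  (forall x y : X, E (odot d x (E y)) = odot d (E x) (E y) /\
                   E (odot d (E x) y) = odot d (E x) (E y)).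

Definition weak_universal_quantifier (d u : X) (A : X -> X) : Prop :=
  good_map d A /\
  A u = u /\ A d = d /\
  (forall x : X, qle (A x) x) /\
  (forall x y : X, A (odot d x (A y)) = odot d (A x) (A y) /\
                   A (odot d (A x) y) = odot d (A x) (A y)) /\
  (forall x : X, A (odot d x x) = odot d (A x) (A x)) /\
  (forall x y : X, A (oplus d x (A y)) = oplus d (A x) (A y) /\
                   A (oplus d (A x) y) = oplus d (A x) (A y)).

End Defs.

(* Main.v *)
Require Import Defs.

Section S.
Variable X : QBAlg.
Variable d : X.
Hypothesis Hwi : weakly_involutive X d.
Local Notation nm := (nmin X d).
Local Notation nt := (ntil X d).

Lemma nt_nm (x : X) : nt (nm x) = x. Proof. exact (proj1 (Hwi x)). Qed.
Lemma nm_nt (x : X) : nm (nt x) = x. Proof. exact (proj2 (Hwi x)). Qed.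

Lemma exch (a b c : X) : qimp a (qsimp b c) = qsimp b (qimp a c).
Proof.
  apply qle_antisym.
  - apply (proj1 (qb4 X _ _ _)).
    apply qle_trans with (qimp (qsimp b c) c).
    + apply (proj2 (qb4 X _ _ _)). apply qle_refl.
    + apply qb1.
  - apply (proj2 (qb4 X _ _ _)).
    apply qle_trans with (qsimp (qimp a c) c).
    + apply (proj1 (qb4 X _ _ _)). apply qle_refl.
    + apply qb2.
Qed.

Lemma rev_m (x y : X) : qle x y -> qle (nm y) (nm x).
Proof.
  intro H. apply (proj2 (qb4 X (nm y) x d)). unfold ntil. 
  change (qle x (nt (nm y))). rewrite nt_nm. exact H.
Qed.

Lemma rev_t (x y : X) : qle x y -> qle (nt y) (nt x).
Proof.
  intro H. apply (proj1 (qb4 X x (nt y) d)).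
  change (qle x (nm (nt y))). rewrite nm_nt. exact H.
Qed.

Lemma contra (x y : X) : qimp x y = qsimp (nm y) (nm x).
Proof.
  apply qle_antisym.
  - apply (proj1 (qb4 X _ _ _)). apply qb1.
  - pose proof (proj2 (qb4 X (qsimp (nm y) (nm x)) (nt (nm x)) (nt (nm y))) (qb2 X (nm y) (nm x) d)) as H.
    rewrite !nt_nm in H. exact H.
Qed.

Lemma oplus_alt (x y : X) : oplus X d x y = qsimp (nm x) y.
Proof. unfold oplus. rewrite contra. rewrite nm_nt. reflexivity. Qed.

Lemma odot_alt (x y : X) : odot X d x y = nm (qsimp y (nt x)).
Proof.
  unfold odot.
  set (P := qimp x (nm y)). set (Q := qsimp y (nt x)).
  assert (hP : forall t, qle (nm t) P <-> qle x (qimp y t)).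
  { intro t. unfold P. split; intro H.
    - apply (proj1 (qb4 X _ _ _)) in H. unfold nmin in H.
      rewrite <- exch in H. change (qle x (qimp y (nt (nm t)))) in H.
      rewrite nt_nm in H. exact H.
    - apply (proj2 (qb4 X _ _ _)). unfold nmin.
      rewrite <- exch. change (qle x (qimp y (nt (nm t)))). rewrite nt_nm. exact H. }
  assert (hQ : forall t, qle (nt t) Q <-> qle x (qimp y t)).
  { intro t. unfold Q. split; intro H.
    - apply (proj2 (qb4 X _ _ _)) in H. unfold ntil in H.
      rewrite exch in H. apply (proj2 (qb4 X _ _ _)) in H.
      change (qle x (qimp y (nm (nt t)))) in H. rewrite nm_nt in H. exact H.
    - apply (proj1 (qb4 X _ _ _)). unfold ntil.
      rewrite exch. apply (proj1 (qb4 X _ _ _)).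
      change (qle x (qimp y (nm (nt t)))). rewrite nm_nt. exact H. }
  apply qle_antisym.
  - pose proof (rev_t _ _ (proj2 (hP (nm Q)) (proj1 (hQ (nm Q)) ltac:(rewrite nt_nm; apply qle_refl)))) as H.
    rewrite nt_nm in H. exact H.
  - pose proof (rev_m _ _ (proj2 (hQ (nt P)) (proj1 (hP (nt P)) ltac:(rewrite nm_nt; apply qle_refl)))) as H.
    rewrite nm_nt in H. exact H.
Qed.

Variable E A : X -> X.
Hypothesis As1 : forall x, A x = nt (E (nm x)).
Hypothesis As2 : forall x, A x = nm (E (nt x)).
Hypothesis EA : forall x, E (A x) = A x.
Hypothesis Ed : E d = d.
Hypothesis Eoplus1 : forall x y, E (oplus X d x (E y)) = oplus X d (E x) (E y).
Hypothesis Eoplus2 : forall x y, E (oplus X d (E x) y) = oplus X d (E x) (E y).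
Hypothesis Eodot1 : forall x y, E (odot X d x (E y)) = odot X d (E x) (E y).
Hypothesis Eodot2 : forall x y, E (odot X d (E x) y) = odot X d (E x) (E y).

Lemma EE (y : X) : E (E y) = E y.
Proof.
  pose proof (Eoplus1 d y) as H. rewrite Ed in H. unfold oplus in H.
  change (qimp (nt (E y)) d) with (nm (nt (E y))) in H. rewrite nm_nt in H. exact H.
Qed.

Lemma F_nm (a : X) : E a = a -> E (nm a) = nm a.
Proof. intro Fa. pose proof (As2 (nm a)) as H. rewrite nt_nm, Fa in H. rewrite <- H. apply EA. Qed.

Lemma F_nt (a : X) : E a = a -> E (nt a) = nt a.
Proof. intro Fa. pose proof (As1 (nt a)) as H. rewrite nm_nt, Fa in H. rewrite <- H. apply EA. Qed.

Lemma F_imp (a b : X) : E a = a -> E b = b -> E (qimp a b) = qimp a b.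
Proof.
  intros Fa Fb. pose proof (Eoplus2 b (nm a)) as H.
  rewrite Fb, (F_nm a Fa) in H. unfold oplus in H. rewrite nt_nm in H. exact H.
Qed.

Lemma F_simp (a b : X) : E a = a -> E b = b -> E (qsimp a b) = qsimp a b.
Proof.
  intros Fa Fb. pose proof (Eoplus1 (nt a) b) as H.
  rewrite Fb, (F_nt a Fa), !oplus_alt, nm_nt in H. exact H.
Qed.

Lemma A_fix (a : X) : E a = a -> A a = a.
Proof. intro Fa. rewrite As1, (F_nm a Fa), nt_nm. reflexivity. Qed.

End S.

Theorem proposition5p12 (X : QBAlg) (d u : X) (E A : X -> X)
  (Hu : unital_unit X u)
  (Hwi : weakly_involutive X d)
  (Hsync : strong_synchronized X d E A)
  (HE : weak_existential_quantifier X d u E) :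
  forall x y : X,
    (A (qimp (A x) (A y)) = qimp (A x) (A y) /\
     A (qsimp (A x) (A y)) = qsimp (A x) (A y)) /\
    (E (qimp (E x) (E y)) = qimp (E x) (E y) /\
     E (qsimp (E x) (E y)) = qsimp (E x) (E y)) /\
    A (odot X d (A x) (A y)) = odot X d (A x) (A y) /\
    E (odot X d (E x) (E y)) = odot X d (E x) (E y) /\
    (A (qsimp (qimp x (A y)) (A y)) = qsimp (qimp (A x) (A y)) (A y) /\
     A (qimp (qsimp x (A y)) (A y)) = qimp (qsimp (A x) (A y)) (A y)).
Proof.
  destruct Hsync as [[_ [_ Hs]] EA].
  assert (As1 : forall x, A x = ntil X d (E (nmin X d x))) by (intro; apply Hs).
  assert (As2 : forall x, A x = nmin X d (E (ntil X d x))) by (intro; apply Hs).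
  destruct HE as [_ [Ed [_ [_ [Hop [_ Hod]]]]]].
  assert (Eoplus1 : forall x y, E (oplus X d x (E y)) = oplus X d (E x) (E y)) by (intros; apply Hop).
  assert (Eoplus2 : forall x y, E (oplus X d (E x) y) = oplus X d (E x) (E y)) by (intros; apply Hop).
  assert (Eodot1 : forall x y, E (odot X d x (E y)) = odot X d (E x) (E y)) by (intros; apply Hod).
  assert (Eodot2 : forall x y, E (odot X d (E x) y) = odot X d (E x) (E y)) by (intros; apply Hod).
  pose proof (EE X d Hwi E Ed Eoplus1) as HEE.
  pose proof (F_nm X d Hwi E A As2 EA) as Fnm.
  pose proof (F_nt X d Hwi E A As1 EA) as Fnt.
  pose proof (F_imp X d Hwi E A As2 EA Eoplus2) as Fimp.
  pose proof (F_simp X d Hwi E A As1 EA Eoplus1) as Fsimp.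
  pose proof (A_fix X d Hwi E A As1 As2 EA) as Afix.
  intros x y.
  set (b := A y).
  assert (Fb : E b = b) by apply EA.
  assert (Fa : E (A x) = A x) by apply EA.
  split; [split|split; [split|split; [|split; [|split]]]].
  - apply Afix, Fimp; auto.
  - apply Afix, Fsimp; auto.
  - apply Fimp; apply HEE.
  - apply Fsimp; apply HEE.
  - apply Afix. unfold odot. apply Fnt, Fimp; auto.
  - unfold odot. apply Fnt, Fimp; [apply HEE|]. apply Fnm, HEE.
  - rewrite As1.
    assert (e : nmin X d (qsimp (qimp x b) b) = odot X d (nmin X d b) (qimp x b))
      by (rewrite (odot_alt X d Hwi), (nt_nm X d Hwi); reflexivity).
    rewrite e.
    pose proof (Eodot2 (nmin X d b) (qimp x b)) as H. rewrite (Fnm b Fb) in H. rewrite H.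
    assert (e2 : qimp x b = oplus X d b (nmin X d x))
      by (unfold oplus; rewrite (nt_nm X d Hwi); reflexivity).
    rewrite e2.
    pose proof (Eoplus2 b (nmin X d x)) as H2. rewrite Fb in H2. rewrite H2.
    unfold oplus. rewrite <- As1.
    rewrite (odot_alt X d Hwi), (nt_nm X d Hwi), (nt_nm X d Hwi). reflexivity.
  - rewrite As2.
    assert (e : ntil X d (qimp (qsimp x b) b) = odot X d (qsimp x b) (ntil X d b))
      by (unfold odot; rewrite (nm_nt X d Hwi); reflexivity).
    rewrite e.
    pose proof (Eodot1 (qsimp x b) (ntil X d b)) as H. rewrite (Fnt b Fb) in H. rewrite H.
    assert (e2 : qsimp x b = oplus X d (ntil X d x) b)
      by (rewrite (oplus_alt X d Hwi), (nm_nt X d Hwi); reflexivity).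
    rewrite e2.
    pose proof (Eoplus1 (ntil X d x) b) as H2. rewrite Fb in H2. rewrite H2.
    rewrite (oplus_alt X d Hwi). rewrite <- As2.
    unfold odot. rewrite (nm_nt X d Hwi), (nm_nt X d Hwi). reflexivity.
Qed.
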